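(* Let $(\tau_\Sigma,\mathbb{B}_\Sigma)_\Sigma$ be a family indexed by the finite sets $\Sigma$ with at least two elements, where $\tau_\Sigma$ is a topology on $\Sigma^{\mathbb{N}}$ and $\mathbb{B}_\Sigma$ is a basis of $\tau_\Sigma$, satisfying: (P1) $\mathbb{B}_\Sigma$ contains every set $N_w$, $w\in\Sigma^*$; (P2) $\mathbb{B}_\Sigma$ is closed under finite unions and finite intersections; (P3) if $\Gamma$ is a finite set with at least two elements and $L\in\mathbb{B}_{\Sigma\times\Gamma}$, then $\pi_0[L]\in\mathbb{B}_\Sigma$; (P4) for each $L\in\mathbb{B}_\Sigma$ there is $C\in\mathbb{B}_{\Sigma\times 2}$ with $C\subseteq\Sigma^{\mathbb{N}}\times\mathbb{P}_\infty$, $C$ closed in $\Sigma^{\mathbb{N}}\times\mathbb{P}_\infty$ (i.e. $C=F\cap(\Sigma^{\mathbb{N}}\times\mathbb{P}_\infty)$ for some $\tau_C$-closed $F\subseteq\Sigma^{\mathbb{N}}\times 2^{\mathbb{N}}$), and $L=\pi_0[C]$. Then every topology $\tau_\Sigma$ is strong Choquet.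
   Context: $N_w=\{\sigma\in\Sigma^{\mathbb{N}}: w\text{ prefix of }\sigma\}$; $\tau_C$ denotes the product-of-discrete (Cantor) topology. $2=\{0,1\}$ and $\mathbb{P}_\infty=\{\alpha\in 2^{\mathbb{N}}: \alpha(i)=1\text{ for infinitely many } i\}$. The space $\Sigma^{\mathbb{N}}\times\Gamma^{\mathbb{N}}$ is identified with $(\Sigma\times\Gamma)^{\mathbb{N}}$ via $(\sigma,\gamma)\mapsto((\sigma(n),\gamma(n)))_n$, and $\pi_0$ is the projection onto the first coordinate. Strong Choquet game on a space $X$: Player 1 plays an open $U_i$ and $x_i\in U_i$ with $U_i\subseteq V_{i-1}$; Player 2 plays an open $V_i$ with $x_i\in V_i\subseteq U_i$; Player 2 wins if $\bigcap_i V_i\neq\emptyset$. $X$ is strong Choquet if it is nonempty and Player 2 has a winning strategy. *)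

(* Defs.v *)
From HB Require Import structures.
From mathcomp Require Import all_boot.
Set Implicit Arguments. Unset Strict Implicit. Unset Printing Implicit Defensive.

Definition pset (X : Type) := X -> Prop.
Definition psubset (X : Type) (A B : pset X) := forall x, A x -> B x.

Definition is_topology (X : Type) (tau : pset (pset X)) : Prop :=
  tau (fun _ => True) /\
  (forall F : pset (pset X), (forall U, F U -> tau U) ->
     tau (fun x => exists U, F U /\ U x)) /\
  (forall U V, tau U -> tau V -> tau (fun x => U x /\ V x)).

Definition is_basis (X : Type) (tau B : pset (pset X)) : Prop :=
  (forall b, B b -> tau b) /\
  (forall U, tau U -> forall x, U x -> exists b, B b /\ b x /\ psubset b U).

Definition cyl (S : Type) (w : seq S) : pset (nat -> S) :=
  fun sigma => [seq sigma i | i <- iota 0 (size w)] = w.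

(* Projection pi_0 of (S x G)^N = S^N x G^N onto S^N, and image of a set. *)
Definition pi0 (S G : Type) (z : nat -> S * G) : nat -> S := fun n => (z n).1.
Definition proj0 (S G : Type) (L : pset (nat -> S * G)) : pset (nat -> S) :=
  fun sigma => exists z, L z /\ pi0 z = sigma.
Definition pi1 (S G : Type) (z : nat -> S * G) : nat -> G := fun n => (z n).2.

Definition Pinf (alpha : nat -> bool) : Prop :=
  forall n, exists i, n <= i /\ alpha i = true.

Definition cantor_open (A : Type) (U : pset (nat -> A)) : Prop :=
  forall x, U x -> exists n, forall y, (forall i, i < n -> y i = x i) -> U y.
Definition cantor_closed (A : Type) (F : pset (nat -> A)) : Prop :=
  cantor_open (fun x => ~ F x).

(* Strong Choquet game on (X, tau).  Player 1's i-th move is a pair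
   (U_i, x_i); a strategy for player 2 maps the finite history of
   player 1's moves (U_0,x_0),...,(U_i,x_i) to V_i. *)
Definition p2_response (X : Type) (s : seq (pset X * X) -> pset X)
  (m : nat -> pset X * X) (i : nat) : pset X :=
  s [seq m j | j <- iota 0 i.+1].

Definition p1_legal (X : Type) (tau : pset (pset X))
  (s : seq (pset X * X) -> pset X) (m : nat -> pset X * X) (i : nat) : Prop :=
  tau (m i).1 /\ (m i).1 (m i).2 /\
  (0 < i -> psubset (m i).1 (p2_response s m i.-1)).

Definition p2_legal (X : Type) (tau : pset (pset X))
  (s : seq (pset X * X) -> pset X) (m : nat -> pset X * X) (i : nat) : Prop :=
  let V := p2_response s m i in
  tau V /\ V (m i).2 /\ psubset V (m i).1.

Definition p2_winning_strategy (X : Type) (tau : pset (pset X))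
  (s : seq (pset X * X) -> pset X) : Prop :=
  (forall m k, (forall j, j <= k -> p1_legal tau s m j) -> p2_legal tau s m k) /\
  (forall m, (forall j, p1_legal tau s m j) ->
     exists x, forall i, p2_response s m i x).

Definition strong_choquet (X : Type) (tau : pset (pset X)) : Prop :=
  inhabited X /\ exists s, p2_winning_strategy tau s.

(* Main.v *)
From Stdlib Require Import ClassicalEpsilon FunctionalExtensionality PropExtensionality Classical.
Require Import Defs.
From HB Require Import structures.
From mathcomp Require Import all_boot.

Section Lim.
Variable T : Type.
Variable d : T.
Variable ws : nat -> seq T.
Hypothesis Hws : forall n, (forall k, k < size (ws n) -> nth d (ws n.+1) k = nth d (ws n) k)
  /\ size (ws n) < size (ws n.+1).

Lemma lim_size n : n <= size (ws n).
Proof.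
elim: n => // n IH; have [_ h] := Hws n; exact: leq_ltn_trans IH h.
Qed.

Lemma lim_pref n p k : k < size (ws n) -> nth d (ws (n + p)) k = nth d (ws n) k.
Proof.
elim: p => [|p IH] hk; first by rewrite addn0.
have [h1 h2] := Hws (n + p).
rewrite addnS h1 ?IH //.
elim: p {IH h1 h2} => [|p IHp]; first by rewrite addn0.
rewrite addnS; have [_ h] := Hws (n + p); exact: ltn_trans IHp h.
Qed.

Lemma lim_nth n k : k < size (ws n) -> nth d (ws k.+1) k = nth d (ws n) k.
Proof.
move=> hk; case: (leqP n k.+1) => h.
  by rewrite -(subnKC h) lim_pref.
have hk2 : k < size (ws k.+1) by apply: leq_trans (lim_size k.+1).
by rewrite -(subnKC (ltnW h)) lim_pref.
Qed.
End Lim.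

Lemma cylP {S : Type} (d : S) (w : seq S) z :
  cyl w z <-> forall k, k < size w -> z k = nth d w k.
Proof.
rewrite /cyl; split.
  move=> E k hk.
  have hk' : k < size (iota 0 (size w)) by rewrite size_iota.
  by rewrite -[in RHS]E (nth_map 0 _ _ hk') nth_iota.
move=> H; apply: (@eq_from_nth _ d); first by rewrite size_map size_iota.
move=> k; rewrite size_map size_iota => hk.
by rewrite (nth_map 0) ?size_iota // nth_iota // add0n H.
Qed.

Section Main.
Variable S : finType.
Variable s0 : S.
Variables (tauS BS : pset (pset (nat -> S))) (BSb : pset (pset (nat -> S * bool))).
Hypothesis Hbas : is_basis tauS BS.
Hypothesis HI : forall L1 L2, BS L1 -> BS L2 -> BS (fun x => L1 x /\ L2 x).
Hypothesis Hproj : forall L, BSb L -> BS (proj0 L).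
Hypothesis Hcyl : forall C (w : seq (S*bool)), BSb C -> BSb (fun z => C z /\ cyl w z).
Hypothesis H4 : forall L, BS L ->
      exists C : pset (nat -> S * bool),
        BSb C /\
        (forall z, C z -> Pinf (pi1 z)) /\
        (exists F : pset (nat -> S * bool), cantor_closed F /\
           forall z, C z <-> (F z /\ Pinf (pi1 z))) /\
        (forall sigma, L sigma <-> proj0 C sigma).

Local Notation X := (nat -> S).
Let d : S * bool := (s0, false).
Let dm : pset X * X := (fun _ => True, fun _ => s0).

Definition goodC (U : pset X) (x : X) (C : pset (nat -> S*bool)) :=
  BSb C /\ (forall z, C z -> Pinf (pi1 z)) /\
  (exists F, cantor_closed F /\ (forall z, C z -> F z) /\
     (forall z, F z -> Pinf (pi1 z) -> C z)) /\
  proj0 C x /\ psubset (proj0 C) U.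

Definition Cof (u : pset X * X) : pset (nat -> S*bool) :=
  match excluded_middle_informative (exists C, goodC u.1 u.2 C) with
  | left H => proj1_sig (constructive_indefinite_description _ H)
  | right _ => fun _ => False end.

Lemma Cof_spec u : tauS u.1 -> u.1 u.2 -> goodC u.1 u.2 (Cof u).
Proof.
move=> hU hx; rewrite /Cof.
case: excluded_middle_informative => [H|H].
  exact: proj2_sig (constructive_indefinite_description _ H).
exfalso; apply: H.
have [_ Hb] := Hbas.
have [L [BL [Lx LU]]] := Hb _ hU _ hx.
have [C [BC [CP [[F [FC FE]] LE]]]] := H4 L BL.
exists C; split => //; split => //; split.
  exists F; split => //; split => z; first by move/FE => [].
  by move=> hF hP; apply/FE.
by split; [apply/LE | move=> y /LE; apply: LU].
Qed.

Definition goodw (C : pset (nat -> S*bool)) (x : X) (w w' : seq (S*bool)) :=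
  (forall k, k < size w -> nth d w' k = nth d w k) /\ size w < size w' /\
  (exists k, size w <= k < size w' /\ (nth d w' k).2 = true) /\
  proj0 (fun z => C z /\ cyl w' z) x.

Definition ext C x w :=
  match excluded_middle_informative (exists w', goodw C x w w') with
  | left H => proj1_sig (constructive_indefinite_description _ H)
  | right _ => w end.

Lemma ext_spec C x w : (forall z, C z -> Pinf (pi1 z)) ->
  proj0 (fun z => C z /\ cyl w z) x -> goodw C x w (ext C x w).
Proof.
move=> CP [z [[Cz cz] ez]]; rewrite /ext.
case: excluded_middle_informative => [H|H].
  exact: proj2_sig (constructive_indefinite_description _ H).
exfalso; apply: H.
have [k [hk zk]] := CP _ Cz (size w).
have cz' := proj1 (cylP d w z) cz.
exists [seq z i | i <- iota 0 k.+1]; split.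
  move=> i hi.
  have hi' : i < size (iota 0 k.+1) by rewrite size_iota; exact: leq_trans hi (leqW hk).
  rewrite (nth_map 0 _ _ hi') nth_iota; last by rewrite -(size_iota 0 k.+1).
  by rewrite add0n cz'.
rewrite size_map size_iota; split; first by rewrite ltnS.
split.
  exists k; rewrite hk ltnSn; split => //.
  by rewrite (nth_map 0) ?size_iota // nth_iota.
exists z; split => //; split => //.
by rewrite /cyl size_map size_iota.
Qed.

Fixpoint Wf (m : nat -> pset X * X) (j i : nat) : seq (S*bool) :=
  match i with
  | 0 => if j == 0 then ext (Cof (m 0)) (m 0).2 [::] else [::]
  | i'.+1 => if j <= i'.+1 then ext (Cof (m j)) (m i'.+1).2 (Wf m j i') else [::]
  end.

Lemma Wf_lt m j i : i < j -> Wf m j i = [::].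
Proof.
case: i => [|i] /=; first by case: j.
by move=> h; rewrite leqNgt h.
Qed.

Lemma Wf_eq m j k : j <= k ->
  Wf m j k = ext (Cof (m j)) (m k).2 (if j == k then [::] else Wf m j k.-1).
Proof.
case: k => [|k] /=; first by rewrite leqn0 => /eqP ->.
move=> ->; case: eqP => // ->; by rewrite Wf_lt.
Qed.

Lemma Wf_ext m m' i : (forall n, n <= i -> m n = m' n) -> forall j, Wf m j i = Wf m' j i.
Proof.
elim: i => [|i IH] H j /=.
  by case: eqP => // _; rewrite H.
case: ifP => // hj; rewrite IH ?H // => n hn; apply: H; exact: leqW.
Qed.

Definition V (m : nat -> pset X * X) i : pset X :=
  fun y => forall j, j <= i -> proj0 (fun z => Cof (m j) z /\ cyl (Wf m j i) z) y.

Definition strat (h : seq (pset X * X)) : pset X :=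
  V (fun n => nth dm h n) (size h).-1.

Lemma resp m i : p2_response strat m i = V m i.
Proof.
rewrite /p2_response /strat size_map size_iota -[i.+1.-1]/i.
have E : forall n, n <= i -> nth dm [seq m j | j <- iota 0 i.+1] n = m n.
  move=> n hn; have hn' : n < size (iota 0 i.+1) by rewrite size_iota.
  by rewrite (nth_map 0 _ _ hn') nth_iota.
apply: functional_extensionality => y; apply: propositional_extensionality.
split => H j hj; have := H j hj;
  by rewrite (Wf_ext _ _ _ E) ?E.
Qed.

Lemma bigI (P : nat -> pset X) k : (forall j, j <= k -> BS (P j)) ->
  BS (fun y => forall j, j <= k -> P j y).
Proof.
elim: k => [|k IH] H.
  have -> : (fun y => forall j, j <= 0 -> P j y) = P 0; last exact: H.
  apply: functional_extensionality => y; apply: propositional_extensionality.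
  split; first by apply.
  by move=> h j; rewrite leqn0 => /eqP ->.
have -> : (fun y => forall j, j <= k.+1 -> P j y) =
          (fun y => (forall j, j <= k -> P j y) /\ P k.+1 y).
  apply: functional_extensionality => y; apply: propositional_extensionality.
  split; first by move=> h; split => [j hj|]; apply: h => //; exact: leqW.
  by move=> [h1 h2] j; rewrite leq_eqVlt ltnS => /orP [/eqP ->|/h1].
apply: HI; last exact: H.
by apply: IH => j hj; apply: H; exact: leqW.
Qed.

Lemma step m k : (forall j, j <= k -> p1_legal tauS strat m j) ->
  forall j, j <= k -> goodC (m j).1 (m j).2 (Cof (m j)) /\
    goodw (Cof (m j)) (m k).2 (if j == k then [::] else Wf m j k.-1) (Wf m j k).
Proof.
move=> HL j hj.
have [t1 [t2 _]] := HL j hj.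
have G := Cof_spec _ t1 t2; split => //.
have [_ [CP [_ [Cx _]]]] := G.
rewrite (Wf_eq m j k hj); apply: ext_spec => //.
case: eqP => [<-|ne].
  case: Cx => z [Cz ez]; exists z; split => //.
have [u1 [u2 u3]] := HL k (leqnn k).
have hk : 0 < k by case: k HL hj ne u3 {u1 u2} => //; rewrite leqn0 => _ /eqP.
have := u3 hk _ u2; rewrite resp; apply.
by rewrite -ltnS prednK // ltn_neqAle hj andbT; apply/eqP.
Qed.

Lemma legal m k : (forall j, j <= k -> p1_legal tauS strat m j) ->
  p2_legal tauS strat m k.
Proof.
move=> HL; rewrite /p2_legal resp; split.
  have [Bt _] := Hbas; apply: Bt; apply: bigI => j hj.
  have [[BC _] _] := step _ _ HL _ hj; apply: Hproj; exact: Hcyl.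
split.
  move=> j hj; have [_ [_ [_ [_ h]]]] := step _ _ HL _ hj; exact: h.
move=> y hy; have [z [[Cz _] ez]] := hy k (leqnn k).
have [[_ [_ [_ [_ sub]]]] _] := step _ _ HL _ (leqnn k).
by apply: sub; exists z.
Qed.

Section Win.
Variable m : nat -> pset X * X.
Hypothesis HL : forall j, p1_legal tauS strat m j.

Let HLk k : forall j, j <= k -> p1_legal tauS strat m j := fun j _ => HL j.

Lemma chain0 j : goodw (Cof (m j)) (m j).2 [::] (Wf m j (j + 0)).
Proof. by rewrite addn0; have [_ h] := step _ _ (HLk j) _ (leqnn j); rewrite eqxx in h. Qed.

Lemma chainS j n : goodw (Cof (m j)) (m (j + n.+1)).2 (Wf m j (j + n)) (Wf m j (j + n.+1)).
Proof.
have hj : j <= j + n.+1 by rewrite leq_addr.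
have [_ h] := step _ _ (HLk (j + n.+1)) _ hj.
move: h; rewrite addnS /=.
have -> : (j == (j + n).+1) = false by apply/negbTE; rewrite neq_ltn ltnS leq_addr.
done.
Qed.

Lemma Gj j : goodC (m j).1 (m j).2 (Cof (m j)).
Proof. by have [h _] := step _ _ (HLk j) _ (leqnn j). Qed.

Let ws j n := Wf m j (j + n).

Lemma Hws j n : (forall k, k < size (ws j n) -> nth d (ws j n.+1) k = nth d (ws j n) k)
  /\ size (ws j n) < size (ws j n.+1).
Proof. by have [h1 [h2 _]] := chainS j n. Qed.

Definition zj j : nat -> S * bool := fun k => nth d (ws j k.+1) k.

Lemma zj_nth j n k : k < size (ws j n) -> zj j k = nth d (ws j n) k.
Proof. move=> h; exact: (@lim_nth _ d (ws j) (Hws j) _ _ h). Qed.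

Lemma ws_in j n : proj0 (fun z => Cof (m j) z /\ cyl (ws j n) z) (m (j + n)).2.
Proof.
case: n => [|n]; first by rewrite /ws !addn0; have [_ [_ [_ h]]] := chain0 j; rewrite addn0 in h.
by have [_ [_ [_ h]]] := chainS j n.
Qed.

Lemma zj_C j : Cof (m j) (zj j).
Proof.
have [_ [CP [[F [FC [CF FC']]] _]]] := Gj j.
apply: FC'.
  apply: NNPP => nF; have [N HN] := FC _ nF.
  have [y [[Cy cy] _]] := ws_in j N.
  apply: (HN y) (CF _ Cy) => i hi.
  have hs : i < size (ws j N) by apply: leq_trans hi (@lim_size _ d (ws j) (Hws j) N).
  by rewrite (proj1 (cylP d _ y) cy) // (zj_nth _ _ _ hs).
move=> n; have [_ [_ [[k [hk ek]] _]]] := chainS j n.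
exists k; split.
  move/andP: hk => [hk _]; exact: leq_trans (@lim_size _ d (ws j) (Hws j) n) hk.
rewrite /pi1; move/andP: hk => [_ hk]; by rewrite (zj_nth _ _ _ hk).
Qed.

Lemma zj_fst j n k : k < size (ws j n) -> (zj j k).1 = (m (j + n)).2 k.
Proof.
move=> hk; have [y [[_ cy] <-]] := ws_in j n.
by rewrite /pi0 (proj1 (cylP d _ y) cy) // (zj_nth _ _ _ hk).
Qed.

Lemma zj_pi0 j : pi0 (zj j) = pi0 (zj 0).
Proof.
apply: functional_extensionality => k; rewrite /pi0.
have h1 : k < size (ws j k.+1) by apply: leq_trans (@lim_size _ d (ws j) (Hws j) _).
have h2 : k < size (ws 0 (j + k.+1)).
  apply: leq_trans (@lim_size _ d (ws 0) (Hws 0) _); rewrite addnS ltnS leq_addl //.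
by rewrite (zj_fst _ _ _ h1) (zj_fst _ _ _ h2) add0n.
Qed.

Lemma win : exists x, forall i, p2_response strat m i x.
Proof.
exists (pi0 (zj 0)) => i; rewrite resp => j hj.
exists (zj j); split; last exact: zj_pi0.
split; first exact: zj_C.
apply/(cylP d) => k hk.
have e : Wf m j i = ws j (i - j) by rewrite /ws subnKC.
by rewrite e in hk *; rewrite (zj_nth _ _ _ hk).
Qed.
End Win.

Lemma main_choquet : strong_choquet tauS.
Proof.
split; first exact: (inhabits (fun _ => s0)).
exists strat; split; first by move=> m k; exact: legal.
move=> m HL; exact: win.
Qed.
End Main.

Theorem theorem3p1
  (tau B : forall S : finType, pset (pset (nat -> S)))
  (Htop : forall S : finType, 1 < #|S| -> is_topology (tau S))
  (Hbasis : forall S : finType, 1 < #|S| -> is_basis (tau S) (B S))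
  (P1 : forall S : finType, 1 < #|S| -> forall w : seq S, B S (cyl w))
  (P2 : forall S : finType, 1 < #|S| -> forall L1 L2,
      B S L1 -> B S L2 ->
      B S (fun x => L1 x \/ L2 x) /\ B S (fun x => L1 x /\ L2 x))
  (P3 : forall S G : finType, 1 < #|S| -> 1 < #|G| ->
      forall L, B (S * G)%type L -> B S (proj0 L))
  (P4 : forall S : finType, 1 < #|S| -> forall L, B S L ->
      exists C : pset (nat -> S * bool),
        B (S * bool)%type C /\
        (forall z, C z -> Pinf (pi1 z)) /\
        (exists F : pset (nat -> S * bool), cantor_closed F /\
           forall z, C z <-> (F z /\ Pinf (pi1 z))) /\
        (forall sigma, L sigma <-> proj0 C sigma)) :
  forall S : finType, 1 < #|S| -> strong_choquet (tau S).
Proof.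
move=> S HS.
have: 0 < #|S| by exact: ltnW.
case/card_gt0P => s0 _.
have HSb : 1 < #|{: S * bool}|.
  by rewrite card_prod card_bool muln2 -addnn; exact: ltn_addr.
apply: (@main_choquet S s0 (tau S) (B S) (B (S * bool)%type)).
- exact: Hbasis.
- by move=> L1 L2 h1 h2; have [_ h] := P2 S HS L1 L2 h1 h2.
- by move=> L hL; apply: (P3 S bool HS) => //; rewrite card_bool.
- by move=> C w hC; have [_ h] := P2 _ HSb C _ hC (P1 _ HSb w).
- exact: P4.
Qed.
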